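(* There exists a full amicable orthogonal design $AOD\big(72;\ 18,54;\ 72\big)$.
   Context: An orthogonal design $OD(m;c_1,\ldots,c_k)$ is an $m\times m$ matrix $X$ with entries from $\{0,\pm x_1,\ldots,\pm x_k\}$, where $x_1,\ldots,x_k$ are commuting indeterminates, such that $XX^{\rm T}=(\sum_j c_jx_j^2)I_m$. An amicable orthogonal design $AOD(m;c_1,\ldots,c_k;d_1,\ldots,d_\ell)$ is a pair $(X;Y)$ where $X$ is an $OD(m;c_1,\ldots,c_k)$ in indeterminates $x_1,\ldots,x_k$, $Y$ is an $OD(m;d_1,\ldots,d_\ell)$ in indeterminates $y_1,\ldots,y_\ell$ disjoint from the $x_i$, and $XY^{\rm T}=YX^{\rm T}$. It is full if neither $X$ nor $Y$ has a zero entry. *)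

(* Defs.v *)
From HB Require Import structures.
From mathcomp Require Import all_boot all_order all_algebra.
Set Implicit Arguments. Unset Strict Implicit. Unset Printing Implicit Defensive.
Import GRing.Theory.
Local Open Scope ring_scope.

(* An entry of a design in k indeterminates x_0..x_{k-1}:
   None = 0, Some (false, j) = + x_j, Some (true, j) = - x_j. *)
Definition dentry (k : nat) := option (bool * 'I_k).

Definition deval (R : nzRingType) (k : nat) (x : 'I_k -> R) (e : dentry k) : R :=
  match e with
  | None => 0
  | Some (b, j) => if b then - x j else x j
  end.

Definition devalmx (R : nzRingType) (m k : nat) (x : 'I_k -> R)
    (X : 'M[dentry k]_m) : 'M[R]_m :=
  map_mx (deval x) X.

(* X is an OD(m; c_1,...,c_k) (k = size c): X X^T = (sum_j c_j x_j^2) I_m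
   as an identity in commuting indeterminates, i.e. under every assignment
   of the indeterminates in every commutative ring. *)
Definition is_OD (m : nat) (c : seq nat) (X : 'M[dentry (size c)]_m) : Prop :=
  forall (R : comNzRingType) (x : 'I_(size c) -> R),
    devalmx x X *m (devalmx x X)^T
    = (\sum_(j < size c) (nth 0%N c j)%:R * x j ^+ 2)%:M.

Definition is_AOD (m : nat) (c d : seq nat)
    (X : 'M[dentry (size c)]_m) (Y : 'M[dentry (size d)]_m) : Prop :=
  [/\ is_OD X, is_OD Y &
      forall (R : comNzRingType) (x : 'I_(size c) -> R) (y : 'I_(size d) -> R),
        devalmx x X *m (devalmx y Y)^T = devalmx y Y *m (devalmx x X)^T].

Definition full_design (m k : nat) (X : 'M[dentry k]_m) : Prop :=
  forall i j, X i j <> None.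

(* Main.v *)
Require Import Defs.
From mathcomp Require Import all_boot all_order all_algebra.
From mathcomp Require Import ring.
Set Implicit Arguments. Unset Strict Implicit. Unset Printing Implicit Defensive.
Import GRing.Theory.
Local Open Scope ring_scope.

Definition o0 : 'I_2 := @Ordinal 2 0 isT.
Definition o1 : 'I_2 := @Ordinal 2 1 isT.
Definition u0 : 'I_1 := @Ordinal 1 0 isT.
Definition Atab : seq (seq (dentry 2)) := [:: [:: Some (true, o1); Some (true, o1); Some (true, o1); Some (true, o0)]; [:: Some (false, o0); Some (true, o1); Some (false, o1); Some (true, o1)]; [:: Some (false, o1); Some (false, o0); Some (true, o1); Some (true, o1)]; [:: Some (false, o1); Some (true, o1); Some (true, o0); Some (false, o1)]].
Definition Btab : seq (seq (dentry 2)) := [:: [:: Some (false, o0); Some (true, o1); Some (false, o1); Some (true, o1)]; [:: Some (false, o1); Some (false, o1); Some (false, o1); Some (false, o0)]; [:: Some (false, o1); Some (true, o1); Some (true, o0); Some (false, o1)]; [:: Some (true, o1); Some (true, o0); Some (false, o1); Some (false, o1)]].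
Definition Ctab : seq (seq bool) := [:: [:: false; false; false; false]; [:: false; false; true; true]; [:: false; true; false; true]; [:: false; true; true; false]].
Definition Dtab : seq (seq bool) := [:: [:: false; false; true; true]; [:: true; true; true; true]; [:: false; true; true; false]; [:: true; false; true; false]].

Definition issq (v : nat) : bool := v \in [:: 1; 2; 4; 8; 9; 13; 15; 16]%N.
Definition Kneg (r s : nat) : bool :=
  if (r == 0%N) || (s == 0%N) then false else ~~ issq ((s + 17 - r) %% 17).
Definition flip k (f : bool) (e : dentry k) : dentry k :=
  match e with None => None | Some (b, v) => Some (xorb f b, v) end.

Definition Xf (i j : nat) : dentry 2 :=
  let p := (i %/ 18)%N in let r := (i %% 18)%N in
  let q := (j %/ 18)%N in let s := (j %% 18)%N in
  if r == s then nth None (nth [::] Atab p) q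
  else flip (Kneg r s) (nth None (nth [::] Btab p) q).

Definition Yf (i j : nat) : dentry 1 :=
  let p := (i %/ 18)%N in let r := (i %% 18)%N in
  let q := (j %/ 18)%N in let s := (j %% 18)%N in
  if r == s then Some (nth false (nth [::] Ctab p) q, u0)
  else Some (xorb (Kneg r s) (nth false (nth [::] Dtab p) q), u0).

Definition coef k (e : dentry k) (a : 'I_k) : int :=
  match e with None => 0 | Some (b, j) => if j == a then (if b then -1 else 1) else 0 end.

Definition rowsOf k (F : nat -> nat -> dentry k) : seq (seq (dentry k)) :=
  [seq [seq F i j | j <- iota 0 72] | i <- iota 0 72].

Definition dotc k1 k2 (r1 : seq (dentry k1)) (r2 : seq (dentry k2)) a b : int :=
  foldr (fun p acc => coef p.1 a * coef p.2 b + acc) 0 (zip r1 r2).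

Definition allp2 (P : nat -> nat -> bool) :=
  all (fun i => all (P i) (iota 0 72)) (iota 0 72).

Definition checkX := let R := rowsOf Xf in allp2 (fun i j =>
  let ri := nth [::] R i in let rj := nth [::] R j in
  [&& dotc ri rj o0 o0 == (if i == j then 18 else 0),
      dotc ri rj o1 o1 == (if i == j then 54 else 0),
      dotc ri rj o0 o1 + dotc ri rj o1 o0 == 0 &
      (nth None ri j != None)]).
Definition checkY := let R := rowsOf Yf in allp2 (fun i j =>
  let ri := nth [::] R i in let rj := nth [::] R j in
  dotc ri rj u0 u0 == (if i == j then 72 else 0)).
Definition checkXY := let R := rowsOf Xf in let Q := rowsOf Yf in allp2 (fun i j =>
  (dotc (nth [::] R i) (nth [::] Q j) o0 u0 == dotc (nth [::] Q i) (nth [::] R j) u0 o0) &&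
  (dotc (nth [::] R i) (nth [::] Q j) o1 u0 == dotc (nth [::] Q i) (nth [::] R j) u0 o1)).

Lemma checkX_ok : checkX = true. Proof. vm_compute. reflexivity. Qed.
Lemma checkY_ok : checkY = true. Proof. vm_compute. reflexivity. Qed.
Lemma checkXY_ok : checkXY = true. Proof. vm_compute. reflexivity. Qed.

Lemma deval_coef (R : nzRingType) k (x : 'I_k -> R) e :
  deval x e = \sum_(a < k) (coef e a)%:~R * x a.
Proof.
case: e => [[b j]|] /=; last by rewrite big1 // => a _; rewrite mul0r.
rewrite (bigD1 j) //= eqxx big1 ?addr0; last first.
  by move=> a /negbTE; rewrite eq_sym => ->; rewrite mul0r.
by case: b; rewrite ?mulN1r ?mul1r.
Qed.

Definition S m k1 k2 (X : 'M[dentry k1]_m) (Z : 'M[dentry k2]_m) i j a b : int :=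
  \sum_(l < m) coef (X i l) a * coef (Z j l) b.

Lemma prodE (R : comNzRingType) m k1 k2 (x : 'I_k1 -> R) (y : 'I_k2 -> R)
  (X : 'M[dentry k1]_m) (Z : 'M[dentry k2]_m) (i j : 'I_m) :
  (devalmx x X *m (devalmx y Z)^T) i j
  = \sum_(a < k1) \sum_(b < k2) (S X Z i j a b)%:~R * (x a * y b).
Proof.
rewrite mxE.
under eq_bigr do rewrite !mxE !deval_coef mulr_suml.
under eq_bigr do under eq_bigr do rewrite mulr_sumr.
rewrite exchange_big; apply: eq_bigr => a _.
rewrite exchange_big; apply: eq_bigr => b _.
rewrite /S rmorph_sum mulr_suml; apply: eq_bigr => l _.
rewrite rmorphM /=; ring.
Qed.

Lemma big_foldr (F : nat -> int) s :
  \sum_(l <- s) F l = foldr (fun l acc => F l + acc) 0 s.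
Proof. by elim: s => [|h s IH]; rewrite ?big_nil ?big_cons ?IH. Qed.

Definition Xm : 'M[dentry (size [:: 18%N; 54%N])]_72 := \matrix_(i < 72, j < 72) Xf i j.
Definition Ym : 'M[dentry (size [:: 72%N])]_72 := \matrix_(i < 72, j < 72) Yf i j.

Lemma dotc_map k1 k2 (f : nat -> dentry k1) (g : nat -> dentry k2) s a b :
  dotc [seq f l | l <- s] [seq g l | l <- s] a b
  = foldr (fun l acc => coef (f l) a * coef (g l) b + acc) 0 s.
Proof. by elim: s => [|h s IH] //=; rewrite /dotc /= -IH. Qed.

Lemma nth_rows k (F : nat -> nat -> dentry k) (i : 'I_72) :
  nth [::] (rowsOf F) i = [seq F i j | j <- iota 0 72].
Proof. by rewrite /rowsOf (nth_map 0%N) ?size_iota // nth_iota. Qed.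

Lemma nth_rows2 k (F : nat -> nat -> dentry k) (i j : 'I_72) :
  nth None (nth [::] (rowsOf F) i) j = F i j.
Proof. by rewrite nth_rows (nth_map 0%N) ?size_iota // nth_iota. Qed.

Lemma SE k1 k2 (F : nat -> nat -> dentry k1) (G : nat -> nat -> dentry k2) (i j : 'I_72) a b :
  S (\matrix_(i < 72, j < 72) F i j) (\matrix_(i < 72, j < 72) G i j) i j a b
  = dotc (nth [::] (rowsOf F) i) (nth [::] (rowsOf G) j) a b.
Proof.
rewrite !nth_rows dotc_map /S -big_foldr.
under eq_bigr do rewrite !mxE.
by rewrite -(big_mkord xpredT (fun l => coef (F i l) a * coef (G j l) b)).
Qed.

Lemma all2P (P : nat -> nat -> bool) : allp2 P -> forall i j : 'I_72, P i j.
Proof.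
move=> H i j.
have Hi : nat_of_ord i \in iota 0 72 by rewrite mem_iota /= ltn_ord.
have Hj : nat_of_ord j \in iota 0 72 by rewrite mem_iota /= ltn_ord.
exact: (allP (allP H _ Hi) _ Hj).
Qed.

Lemma E0 : (ord0 : 'I_2) = o0. Proof. exact: val_inj. Qed.
Lemma E1 : (lift ord0 ord0 : 'I_2) = o1. Proof. exact: val_inj. Qed.
Lemma F0 : (ord0 : 'I_1) = u0. Proof. exact: val_inj. Qed.

Lemma odX : is_OD Xm.
Proof.
move=> R x; apply/matrixP => i j.
rewrite prodE /Xm !mxE !big_ord_recl !big_ord0 /=.
have -> : (lift ord0 ord0 : 'I_(size [:: 18%N; 54%N])) = o1 by apply: val_inj.
have -> : (ord0 : 'I_(size [:: 18%N; 54%N])) = o0 by apply: val_inj.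
rewrite !SE.
have /and4P[/eqP h00 /eqP h11 /eqP h01 _] := all2P checkX_ok i j.
have h10 : dotc (nth [::] (rowsOf Xf) i) (nth [::] (rowsOf Xf) j) o1 o0 = - dotc (nth [::] (rowsOf Xf) i) (nth [::] (rowsOf Xf) j) o0 o1 by apply/eqP; rewrite -addr_eq0 addrC h01.
rewrite h00 h11 h10.
case: ifP => Hij.
  have -> : (i == j) = true := Hij.
  rewrite mulr1n; ring.
have -> : (i == j) = false := Hij.
rewrite mulr0n; ring.
Qed.

Lemma odY : is_OD Ym.
Proof.
move=> R y; apply/matrixP => i j.
rewrite prodE /Ym !mxE !big_ord_recl !big_ord0 /=.
have -> : (ord0 : 'I_(size [:: 72%N])) = u0 by apply: val_inj.
rewrite !SE.
have /eqP h := all2P checkY_ok i j.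
rewrite h; case: ifP => Hij.
  have -> : (i == j) = true := Hij.
  rewrite mulr1n; ring.
have -> : (i == j) = false := Hij.
rewrite mulr0n; ring.
Qed.

Lemma amXY (R : comNzRingType) (x : 'I_(size [:: 18%N; 54%N]) -> R)
  (y : 'I_(size [:: 72%N]) -> R) :
  devalmx x Xm *m (devalmx y Ym)^T = devalmx y Ym *m (devalmx x Xm)^T.
Proof.
apply/matrixP => i j.
rewrite !prodE /Xm /Ym !big_ord_recl !big_ord0 /=.
have -> : (lift ord0 ord0 : 'I_(size [:: 18%N; 54%N])) = o1 by apply: val_inj.
have -> : (ord0 : 'I_(size [:: 18%N; 54%N])) = o0 by apply: val_inj.
have -> : (ord0 : 'I_(size [:: 72%N])) = u0 by apply: val_inj.
rewrite !SE.
have /andP[/eqP h0 /eqP h1] := all2P checkXY_ok i j.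
rewrite h0 h1; ring.
Qed.

Theorem mainTheorem4 :
  exists (X : 'M[dentry (size [:: 18%N; 54%N])]_72)
         (Y : 'M[dentry (size [:: 72%N])]_72),
    is_AOD X Y /\ full_design X /\ full_design Y.
Proof.
exists Xm, Ym; split; [split; [exact: odX | exact: odY | exact: amXY] | split].
  move=> i j; rewrite /Xm mxE; apply/eqP.
  by have /and4P[_ _ _] := all2P checkX_ok i j; rewrite nth_rows2.
by move=> i j; rewrite /Ym mxE /Yf /=; case: ifP.
Qed.
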